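(* Let $0\le r\le n$, $A\in\mathcal{A}_{n+1,r+1}$, and fix a tiling of $\Gamma(X(A))$. Consider the labels of the northwest boundary edges at the termination of the fusion-exchange algorithm applied to $A$, and let $L$ and $J$ be two such labels with $J\succ L$. Then: (i) if $L$ and $J$ both label horizontal edges, the edge labeled $J$ is east of the edge labeled $L$; (ii) if $L$ and $J$ both label vertical edges, the edge labeled $J$ is south of the edge labeled $L$; (iii) if $L$ and $J$ both label diagonal edges, the edge labeled $J$ is north of the edge labeled $L$.
   Context: Words and diagrams. For $0\le r\le n$ let $B_n^r$ be the set of words $X\in\{H,L,0\}^n$ with exactly $r$ letters $L$. If $X$ has $k$ letters $H$, $r$ letters $L$ and $\ell$ letters $0$, its rhombic diagram $\Gamma(X)$ is the closed region bounded by two paths of unit steps, using the directions west (horizontal), south (vertical) and southwest (diagonal: a fixed unit vector strictly between west and south), both going from a point $P$ to a point $Q$: the northwest boundary consists of $\ell$ west steps, then $r$ southwest steps, then $k$ south steps; the southeast boundary is obtained by reading $X$ left to right and taking a west step for each $0$, a southwest step for each $L$, a south step for each $H$. A tiling of $\Gamma(X)$ is a tiling by unit rhombi of three kinds: squares (horizontal and vertical edges), tall rhombi (vertical and diagonal edges), short rhombi (horizontal and diagonal edges). Each tile has two edges on its lower-right side: its east edge (vertical for squares and tall rhombi, diagonal for short rhombi) and its south edge (horizontal for squares and short rhombi, diagonal for tall rhombi); the parallel edges on its upper-left side are its west and north edges. Assemblées. An assemblée of size $(m,s)$ is a collection of $s$ nonempty, pairwise disjoint, linearly ordered sets (blocks)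 with union $\{1,\dots,m\}$; the last element of a block is its block-end. Blocks are listed in the canonical order with decreasing block-ends, and the assemblée is identified with the concatenated word. $\mathcal{A}_{m,s}$ is the set of these. For $A\in\mathcal{A}_{n+1,r+1}$ with block-ends $b_1>\dots>b_{r+1}$, a non-block-end element $x$ is an increase if $x+1$ appears to the right of $x$ in $A$, and a decrease otherwise (so $n+1$, if not a block-end, is a decrease). $X(A)\in B_n^r$ is obtained from $A$ by deleting its last letter $b_{r+1}$ and replacing each increase by $H$, each decrease by $0$ and each remaining block-end by $L$. Fusion-exchange algorithm. A label is a finite, possibly empty, set of consecutive integers; for labels $E,S$ write $E\succ S$ if both are nonempty and $\min E=\max S+1$. Given $A\in\mathcal{A}_{n+1,r+1}$ and a tiling of $\Gamma(X(A))$: initially the southeast boundary edges, in order from $P$ to $Q$, receive the singleton labels of the letters of $A$ from left to right, $b_{r+1}$ omitted. Step: choose a tile whose east and south edges are labeled, say by $E$ and $S$, and whose west and north edges are not. (R I) If $E\succ S$ and the south edge is horizontal: west edge gets $E\cup S$, north edge gets $\emptyset$, place $\alpha$ in the tile. (R II) If $S\succ E$ and the east edge is vertical: north edge gets $E\cup S$, west edge gets $\emptyset$, place $\beta$. (R III) Otherwise: west edge gets $E$, north edge gets $S$, and place $q$ if $E\ne\emptyset$ and $S\ne\emptyset$. Repeat until every edge is labeled (termination). *)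

(* Defs.v *)
From HB Require Import structures.
From mathcomp Require Import all_boot.
Set Implicit Arguments. Unset Strict Implicit. Unset Printing Implicit Defensive.

(* lH = letter H (south step), lL = letter L (southwest step),
   l0 = letter 0 (west step). *)
Inductive letter := lH | lL | l0.

Definition letter_eqb (a b : letter) : bool :=
  match a, b with lH, lH | lL, lL | l0, l0 => true | _, _ => false end.
Lemma letter_eqP : Equality.axiom letter_eqb.
Proof. by case; case; constructor. Qed.
HB.instance Definition _ := hasDecEq.Build letter letter_eqP.

(* Order 0 < L < H : the northwest boundary word is 0^l L^r H^k. *)
Definition lrank (c : letter) : nat :=
  match c with l0 => 0 | lL => 1 | lH => 2 end.

Definition nw_word (X : seq letter) : seq letter :=
  nseq (count_mem l0 X) l0 ++ nseq (count_mem lL X) lL ++ nseq (count_mem lH X) lH.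

(* A tile whose east and
   south edges are consecutive edges i, i+1 of the current path has lower-right
   side  "H 0" (square), "H L" (tall rhombus) or "L 0" (short rhombus); adding it
   replaces these two edges by its upper-left side "0 H", "L H", "0 L", i.e. the
   two letters are swapped.  After the swap, edge i is the tile's north edge and
   edge i+1 its west edge.  A tiling of Gamma(X) is encoded by a sequence of such
   flips (an order in which its tiles can be added) leading from the southeast
   boundary X to the northwest boundary. *)
Definition swap_at (T : Type) (x0 : T) (s : seq T) (i : nat) : seq T :=
  set_nth x0 (set_nth x0 s i (nth x0 s i.+1)) i.+1 (nth x0 s i).

Definition valid_flip (w : seq letter) (i : nat) : bool :=
  (i.+1 < size w) && (lrank (nth l0 w i.+1) < lrank (nth l0 w i)).

Fixpoint sweep (w : seq letter) (fs : seq nat) : option (seq letter) :=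
  match fs with
  | [::] => Some w
  | i :: fs' => if valid_flip w i then sweep (swap_at l0 w i) fs' else None
  end.

Definition tiling_of (X : seq letter) (fs : seq nat) : Prop :=
  sweep X fs = Some (nw_word X).

(* A label is a finite set of integers, represented by a list of its elements. *)
Definition label := seq nat.
Definition lmin (E : label) : nat := \big[minn/head 0 E]_(x <- E) x.
Definition lmax (E : label) : nat := \max_(x <- E) x.
Definition lsucc (E S : label) : bool :=
  [&& E != [::], S != [::] & lmin E == (lmax S).+1].

(* An assemblee of size (m,s) is given by its list of blocks in canonical order. *)
Definition is_assemblee (m s : nat) (B : seq (seq nat)) : Prop :=
  [/\ size B = s, all (fun b => b != [::]) B,
      perm_eq (flatten B) (iota 1 m) &
      sorted (fun x y => y < x) (map (last 0) B)].

Definition aword (B : seq (seq nat)) : seq nat := flatten B.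
Definition block_ends (B : seq (seq nat)) : seq nat := map (last 0) B.

Definition is_increase (B : seq (seq nat)) (x : nat) : bool :=
  (x.+1 \in aword B) && (index x (aword B) < index x.+1 (aword B)).

Definition aword_init (B : seq (seq nat)) : seq nat :=
  take (size (aword B)).-1 (aword B).

Definition XA (B : seq (seq nat)) : seq letter :=
  map (fun x => if x \in block_ends B then lL
                else if is_increase B x then lH else l0) (aword_init B).

Definition fe_step (w : seq letter) (lab : seq label) (i : nat) : seq label :=
  let E := nth [::] lab i in
  let S := nth [::] lab i.+1 in
  if lsucc E S && (nth l0 w i.+1 == l0) then
    set_nth [::] (set_nth [::] lab i [::]) i.+1 (E ++ S)
  else if lsucc S E && (nth l0 w i == lH) then
    set_nth [::] (set_nth [::] lab i (E ++ S)) i.+1 [::]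
  else
    set_nth [::] (set_nth [::] lab i S) i.+1 E.

Fixpoint fe_run (w : seq letter) (lab : seq label) (fs : seq nat) : seq label :=
  match fs with
  | [::] => lab
  | i :: fs' => fe_run (swap_at l0 w i) (fe_step w lab i) fs'
  end.

(* Final labels of the northwest boundary edges, listed from P to Q. *)
Definition fe_final (B : seq (seq nat)) (fs : seq nat) : seq label :=
  fe_run (XA B) (map (fun x => [:: x]) (aword_init B)) fs.

(* Main.v *)
Require Import Defs.
From mathcomp Require Import all_boot.
From mathcomp Require Import zify.
Set Implicit Arguments. Unset Strict Implicit. Unset Printing Implicit Defensive.


Lemma bigmin_props (i : nat) (s : seq nat) :
  (\big[minn/i]_(x <- s) x \in i :: s) /\
  (forall x, x \in i :: s -> \big[minn/i]_(x <- s) x <= x).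
Proof.
elim: s => [|a s [IH1 IH2]]; rewrite ?big_nil ?big_cons.
  split; first by rewrite mem_head.
  by move=> x; rewrite inE => /eqP ->.
split.
  have [->|->] : minn a (\big[minn/i]_(x <- s) x) = a \/
                 minn a (\big[minn/i]_(x <- s) x) = \big[minn/i]_(x <- s) x by lia.
    by rewrite !inE eqxx orbT.
  by move: IH1; rewrite !inE => /orP [->|->]; rewrite ?orbT.
move=> x; rewrite !inE => /or3P [/eqP->|/eqP->|xs].
- have := IH2 i (mem_head _ _); lia.
- lia.
- have := IH2 x; rewrite inE xs orbT => /(_ isT); lia.
Qed.

Lemma bigmax_props (s : seq nat) :
  (\max_(x <- s) x \in 0 :: s) /\ (forall x, x \in s -> x <= \max_(x <- s) x).
Proof.
elim: s => [|a s [IH1 IH2]]; rewrite ?big_nil ?big_cons.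
  by split; first by rewrite mem_head.
split.
  have [->|->] : maxn a (\max_(x <- s) x) = a \/
                 maxn a (\max_(x <- s) x) = \max_(x <- s) x by lia.
    by rewrite !inE eqxx orbT.
  by move: IH1; rewrite !inE => /orP [->|->]; rewrite ?orbT.
move=> x; rewrite !inE => /orP [/eqP->|xs]; first lia.
have := IH2 x xs; lia.
Qed.

Lemma lmin_mem E : E != [::] -> lmin E \in E.
Proof. case: E => // e E _; have [h _] := bigmin_props e (e :: E).
by move: h; rewrite /lmin /= inE => /orP [/eqP->|//]; rewrite mem_head. Qed.

Lemma lmin_le E x : x \in E -> lmin E <= x.
Proof. case: E => // e E xE; have [_ h] := bigmin_props e (e :: E).
by apply: h; rewrite inE xE orbT. Qed.

Lemma lmax_le S x : x \in S -> x <= lmax S.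
Proof. by have [_ h] := bigmax_props S; apply: h. Qed.

Lemma lmax_mem S : S != [::] -> lmax S \in S.
Proof.
case: S => // s S _; have [h _] := bigmax_props (s :: S).
move: h; rewrite /lmax inE => /orP [/eqP h|//].
have := lmax_le (mem_head s S); rewrite /lmax h => hs.
have -> : s = 0 by lia.
by rewrite -h /lmax; move: (bigmax_props (s::S)) => _; rewrite h mem_head.
Qed.

Definition ltl (l l' : label) := forall x y, x \in l -> y \in l' -> x < y.
Definition adjl (l l' : label) := exists x y, [/\ x \in l, y \in l' & y = x.+1].
Definition conv (l : label) := forall x y z, x \in l -> y \in l -> x <= z -> z <= y -> z \in l.

Lemma lsuccP J L : lsucc J L <-> ltl L J /\ adjl L J.
Proof.
split.
  case/and3P => hJ hL /eqP he; split.
    move=> x y xL yJ; have := lmax_le xL; have := lmin_le yJ; lia.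
  by exists (lmax L), (lmin J); split => //; [apply: lmax_mem | apply: lmin_mem].
case=> hlt [x [y [xL yJ ey]]]; subst y.
have hJ : J != [::] by case: J {hlt} yJ.
have hL : L != [::] by case: L {hlt} xL.
rewrite /lsucc hJ hL /=; apply/eqP.
have := lmin_le yJ; have := lmax_le xL.
have := hlt _ _ (lmax_mem hL) (lmin_mem hJ); lia.
Qed.


Definition P2 (e e' : letter * label) : Prop :=
 [/\ (forall x, x \in e.2 -> x \in e'.2 -> False),
     (e.1 = lL -> e'.1 = lL -> ltl e'.2 e.2),
     (lsucc e'.2 e.2 -> e.1 <> l0) &
     (lsucc e.2 e'.2 -> e'.1 <> lH)].

Lemma lsucc_nil_l S : lsucc [::] S = false. Proof. by []. Qed.
Lemma lsucc_nil_r S : lsucc S [::] = false. Proof. by rewrite /lsucc andbF. Qed.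

Lemma P2_nil_r e c : P2 e (c, [::]).
Proof. split => /=; [by move=> x _; rewrite in_nil | by move=> _ _ x y; rewrite in_nil
  | by rewrite lsucc_nil_l | by rewrite lsucc_nil_r]. Qed.
Lemma P2_nil_l e c : P2 (c, [::]) e.
Proof. split => /=; [by move=> x; rewrite in_nil | by move=> _ _ x y _; rewrite in_nil
  | by rewrite lsucc_nil_r | by rewrite lsucc_nil_l]. Qed.

Lemma conv_nil : conv [::]. Proof. by []. Qed.

Lemma conv_cat E S : conv E -> conv S -> lsucc E S -> conv (E ++ S).
Proof.
move=> cE cS /lsuccP [lt [s0 [e0 [s0S e0E ee]]]] x y z.
rewrite !mem_cat => /orP [xE|xS] /orP [yE|yS] h1 h2.
- by rewrite (cE x y z).
- have := lt _ _ yS xE; lia.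
- have [hz|hz] : z <= s0 \/ e0 <= z by lia.
    by rewrite (cS x s0 z) ?orbT.
  by rewrite (cE e0 y z).
- by rewrite (cS x y z) ?orbT.
Qed.

Lemma conv_catC E S : conv (E ++ S) -> conv (S ++ E).
Proof. move=> h x y z h1 h2 h3 h4.
have: z \in E ++ S by apply: (h x y z) => //; rewrite mem_cat orbC -mem_cat.
by rewrite !mem_cat orbC. Qed.

Definition good (x y x' y' : letter * label) :=
  [/\ conv x'.2, conv y'.2, P2 x' y',
      (forall e, conv e.2 -> P2 e x -> P2 e y -> P2 e x' /\ P2 e y') &
      (forall e, conv e.2 -> P2 x e -> P2 y e -> P2 x' e /\ P2 y' e)].

Lemma ltl_catl A B l : ltl (A ++ B) l -> ltl A l /\ ltl B l.
Proof. by move=> h; split=> x y xA yl; apply: h => //; rewrite mem_cat xA ?orbT. Qed.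
Lemma ltl_catr A B l : ltl l (A ++ B) -> ltl l A /\ ltl l B.
Proof. by move=> h; split=> x y xl yA; apply: h => //; rewrite mem_cat yA ?orbT. Qed.

Lemma rule_I a E S : a <> l0 -> lsucc E S -> conv E -> conv S -> P2 (a, E) (l0, S) ->
  good (a, E) (l0, S) (l0, [::]) (a, E ++ S).
Proof.
move=> a0 hES cE cS _.
move: hES => /[dup] hES /lsuccP [ltSE [s0 [e0 [s0S e0E ee]]]].
split => //=; [exact: conv_cat | exact: P2_nil_l | |].
- case=> c l cl /= [/= d1 d2 d3 d4] [/= f1 f2 f3 f4]; split; first exact: P2_nil_r.
  split => /=.
  + by move=> x xl; rewrite mem_cat => /orP [/(d1 x xl)|/(f1 x xl)].
  + move=> cL aL x y; rewrite mem_cat => /orP [xE|xS] yl; first exact: d2.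
    have := ltSE _ _ xS e0E; have := d2 cL aL _ _ e0E yl; lia.
  + case/lsuccP => lt [m [y [ml yES ey]]]; have [lt1 lt2] := ltl_catr lt.
    move: yES; rewrite mem_cat => /orP [yE|yS].
      have := lt2 _ _ ml s0S.
      have := ltSE _ _ s0S yE; lia.
    by apply: f3; apply/lsuccP; split => //; exists m, y.
  + case/lsuccP => lt [z [y [zES yl ey]]]; have [lt1 lt2] := ltl_catl lt.
    move: zES; rewrite mem_cat => /orP [zE|zS].
      by apply: d4; apply/lsuccP; split => //; exists z, y.
    have := lt1 _ _ e0E yl; have := ltSE _ _ zS e0E; lia.
- case=> c l cl /= [/= d1 d2 d3 d4] [/= f1 f2 f3 f4]; split; first exact: P2_nil_l.
  split => /=.
  + by move=> x; rewrite mem_cat => /orP [/d1|/f1].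
  + move=> aL cL y x yl; rewrite mem_cat => /orP [xE|xS]; first exact: d2.
    have [//|hle] := ltnP y x.
    have : y \in S.
      apply: (cS x s0 y) => //; have := d2 aL cL _ _ yl e0E; lia.
    by move/(f1 y)/(_ yl).
  + by [].
  + case/lsuccP => lt [m [y [ml yES ey]]]; have [lt1 lt2] := ltl_catr lt.
    move: yES; rewrite mem_cat => /orP [yE|yS].
      by apply: d4; apply/lsuccP; split => //; exists m, y.
    by apply: f4; apply/lsuccP; split => //; exists m, y.
Qed.

Lemma rule_II b E S : b <> lH -> lsucc S E -> conv E -> conv S -> P2 (lH, E) (b, S) ->
  good (lH, E) (b, S) (b, E ++ S) (lH, [::]).
Proof.
move=> bH hSE cE cS _.
move: hSE => /[dup] hSE /lsuccP [ltES [e0 [s0 [e0E s0S ee]]]].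
split => //=; [exact: conv_catC (conv_cat cS cE hSE) | exact: P2_nil_r | |].
- case=> c l cl /= [/= d1 d2 d3 d4] [/= f1 f2 f3 f4]; split; last exact: P2_nil_r.
  split => /=.
  + by move=> x xl; rewrite mem_cat => /orP [/(d1 x xl)|/(f1 x xl)].
  + move=> cL bL x y; rewrite mem_cat => /orP [xE|xS] yl; last exact: f2.
    have := ltES _ _ xE s0S; have := f2 cL bL _ _ s0S yl; lia.
  + case/lsuccP => lt [m [y [ml yES ey]]]; have [lt1 lt2] := ltl_catr lt.
    move: yES; rewrite mem_cat => /orP [yE|yS].
      by apply: d3; apply/lsuccP; split => //; exists m, y.
    by apply: f3; apply/lsuccP; split => //; exists m, y.
  + by [].
- case=> c l cl /= [/= d1 d2 d3 d4] [/= f1 f2 f3 f4]; split; last exact: P2_nil_l.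
  split => /=.
  + by move=> x; rewrite mem_cat => /orP [/d1|/f1].
  + move=> bL cL y x yl; rewrite mem_cat => /orP [xE|xS]; last exact: f2.
    have [//|hle] := ltnP y x.
    have : y \in E.
      apply: (cE x e0 y) => //; have := f2 bL cL _ _ yl s0S; lia.
    by move/(d1 y)/(_ yl).
  + case/lsuccP => lt [z [y [zES yl ey]]]; have [lt1 lt2] := ltl_catl lt.
    move: zES; rewrite mem_cat => /orP [zE|zS].
      have := lt2 _ _ s0S yl; have := ltES _ _ zE s0S; lia.
    by apply: f3; apply/lsuccP; split => //; exists z, y.
  + case/lsuccP => lt [m [y [ml yES ey]]]; have [lt1 lt2] := ltl_catr lt.
    move: yES; rewrite mem_cat => /orP [yE|yS].
      by apply: d4; apply/lsuccP; split => //; exists m, y.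
    by apply: f4; apply/lsuccP; split => //; exists m, y.
Qed.

Lemma rule_III a b E S : a <> b -> (lsucc E S -> b <> l0) -> (lsucc S E -> a <> lH) ->
  conv E -> conv S -> P2 (a, E) (b, S) ->
  good (a, E) (b, S) (b, S) (a, E).
Proof.
move=> ab h1 h2 cE cS [/= d1 d2 d3 d4].
split => //=.
- split => //= [x xS xE|bL aL]; first exact: d1 xE xS.
  by move: ab; rewrite aL bL.
Qed.


Definition ent (w : seq letter) (lab : seq label) k := (nth l0 w k, nth [::] lab k).
Definition Inv w lab := (forall k, conv (nth [::] lab k)) /\
  (forall p q, p < q -> P2 (ent w lab p) (ent w lab q)).

Lemma Inv_repl w lab w' lab' i x' y' : Inv w lab ->
  good (ent w lab i) (ent w lab i.+1) x' y' ->
  ent w' lab' i = x' -> ent w' lab' i.+1 = y' ->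
  (forall k, k != i -> k != i.+1 -> ent w' lab' k = ent w lab k) -> Inv w' lab'.
Proof.
move=> [hc hp] [c1 c2 pxy hb ha] ei ei1 eo.
have E k : ent w' lab' k = if k == i then x' else if k == i.+1 then y' else ent w lab k.
  case: eqP => [->//|/eqP ki]; case: eqP => [->//|/eqP ki1]; exact: eo.
split.
  move=> k; change (conv (ent w' lab' k).2).
  rewrite E; case: eqP => // _; case: eqP => // _; exact: hc.
move=> p q pq; rewrite !E.
case: eqP => [pi|/eqP pi].
  subst p; case: eqP => [qi|/eqP qi]; first lia.
  case: eqP => [qi1|/eqP qi1] //.
  have [+ _] := ha (ent w lab q) (hc q) (hp _ _ pq) (hp i.+1 q ltac:(lia)); by [].
case: eqP => [pi1|/eqP pi1].
  subst p; case: eqP => [qi|/eqP qi]; first lia.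
  case: eqP => [qi1|/eqP qi1]; first lia.
  have [_ +] := ha (ent w lab q) (hc q) (hp i q ltac:(lia)) (hp _ _ pq); by [].
case: eqP => [qi|/eqP qi].
  subst q; have [+ _] := hb (ent w lab p) (hc p) (hp _ _ pq) (hp p i.+1 ltac:(lia)); by [].
case: eqP => [qi1|/eqP qi1]; last exact: hp.
subst q; have [_ +] := hb (ent w lab p) (hc p) (hp p i ltac:(lia)) (hp _ _ pq); by [].
Qed.

Lemma ieq i : (i == i.+1) = false. Proof. by elim: i. Qed.
Lemma ieq' i : (i.+1 == i) = false. Proof. by elim: i. Qed.

Lemma step_inv w lab i : valid_flip w i -> Inv w lab ->
  Inv (swap_at l0 w i) (fe_step w lab i).
Proof.
move=> /andP [_ hr] hI.
have hIc := hI.1.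
set a := nth l0 w i; set b := nth l0 w i.+1.
set E := nth [::] lab i; set S := nth [::] lab i.+1.
have hP : P2 (a, E) (b, S) by apply: hI.2.
have sw k : nth l0 (swap_at l0 w i) k =
    if k == i then b else if k == i.+1 then a else nth l0 w k.
  rewrite /swap_at nth_set_nth /= nth_set_nth /=.
  have [->|ki] := eqVneq k i; first by rewrite ?ieq ?eqxx.
  case: ifP => // /eqP ekk; subst k; by rewrite eqxx.
have lb k X Y : nth [::] (set_nth [::] (set_nth [::] lab i X) i.+1 Y) k =
    if k == i then X else if k == i.+1 then Y else nth [::] lab k.
  rewrite nth_set_nth /= nth_set_nth /=.
  have [->|ki] := eqVneq k i; first by rewrite ?ieq ?eqxx.
  case: ifP => // /eqP ekk; subst k; by rewrite eqxx.
rewrite /fe_step -/E -/S -/a -/b.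
case: ifP => [/andP [hES /eqP hb]|hI1].
  apply: (Inv_repl (x' := (l0, [::])) (y' := (a, E ++ S)) (i := i) hI).
  - rewrite /ent -/a -/b -/E -/S hb.
    apply: rule_I; [ |exact: hES|exact: hIc|exact: hIc| by rewrite -hb].
    by move=> ha0; move: hr; rewrite -/a -/b hb ha0.
  - by rewrite /ent sw lb eqxx hb.
  - by rewrite /ent sw lb ieq' eqxx.
  - by move=> k /negPf ki /negPf ki1; rewrite /ent sw lb ki ki1.
case: ifP => [/andP [hSE /eqP ha]|hI2].
  apply: (Inv_repl (x' := (b, E ++ S)) (y' := (lH, [::])) (i := i) hI).
  - rewrite /ent -/a -/b -/E -/S ha.
    apply: rule_II; [ |exact: hSE|exact: hIc|exact: hIc| by rewrite -ha].
    by move=> hb0; move: hr; rewrite -/a -/b ha hb0.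
  - by rewrite /ent sw lb eqxx.
  - by rewrite /ent sw lb ieq' eqxx ha.
  - by move=> k /negPf ki /negPf ki1; rewrite /ent sw lb ki ki1.
apply: (Inv_repl (x' := (b, S)) (y' := (a, E)) (i := i) hI).
- rewrite /ent -/a -/b -/E -/S.
  apply: rule_III; [ | | |exact: hIc|exact: hIc|exact: hP].
  + by move=> hab; move: hr; rewrite -/a -/b hab ltnn.
  + by move=> h hb; move: hI1; rewrite h hb.
  + by move=> h ha; move: hI2; rewrite h ha.
- by rewrite /ent sw lb eqxx.
- by rewrite /ent sw lb ieq' eqxx.
- by move=> k /negPf ki /negPf ki1; rewrite /ent sw lb ki ki1.
Qed.

Lemma run_inv fs : forall w lab w', Inv w lab -> sweep w fs = Some w' ->
  Inv w' (fe_run w lab fs).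
Proof.
elim: fs => [|i fs IH] w lab w' hI /=; first by case=> <-.
case: ifP => // vf; apply: IH; exact: step_inv.
Qed.


Lemma last_in_flat B z : all (fun b => b != [::]) B -> z \in map (last 0) B ->
  z \in flatten B.
Proof.
elim: B => [|b B IH] //= /andP [bn aB]; rewrite inE mem_cat => /orP [/eqP ->|zB].
  by case: b bn => // c b _ /=; rewrite mem_last.
by rewrite IH ?orbT.
Qed.

Lemma be_order B : uniq (flatten B) -> all (fun b => b != [::]) B ->
  sorted (fun x y => y < x) (map (last 0) B) -> forall p q, p < q ->
  q < size (flatten B) ->
  nth 0 (flatten B) p \in map (last 0) B -> nth 0 (flatten B) q \in map (last 0) B ->
  nth 0 (flatten B) q < nth 0 (flatten B) p.
Proof.
elim: B => [|b B IH] //= hu /andP [bn aB] hs p q pq qs.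
rewrite cat_uniq in hu; case/and3P: hu => ub hnot uF.
have disj z : z \in b -> z \in flatten B -> False.
  by move=> zb zF; move/negP: hnot; apply; apply/hasP; exists z.
have lb : last 0 b \in b by move: bn; clear; case: b => // c b _ /=; rewrite mem_last.
have tr : transitive (fun x y : nat => y < x).
  by move=> y x z h1 h2; apply: ltn_trans h2 h1.
move: hs; rewrite /= (path_sortedE tr) => /andP [/allP hall hs].
rewrite size_cat in qs.
have notlast z : z \in flatten B -> (z == last 0 b) = false.
  by move=> zF; apply/eqP => e; apply: (disj z) => //; rewrite e.
have islast z : z \in b -> z \in (last 0 b) :: map (last 0) B -> z = last 0 b.
  move=> zb; rewrite inE => /orP [/eqP //|/(last_in_flat aB) zF]; exfalso; exact: disj zb zF.
rewrite !nth_cat.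
have [pb|pb] : p < size b \/ size b <= p by lia.
  rewrite pb.
  have xb : nth 0 b p \in b by apply: mem_nth.
  move=> /(islast _ xb) xl.
  have [qb|qb] : q < size b \/ size b <= q by lia.
    rewrite qb.
    have yb : nth 0 b q \in b by apply: mem_nth.
    move=> /(islast _ yb) yl; exfalso.
    have := nth_uniq 0 pb qb ub; rewrite xl yl eqxx => /esym /eqP; lia.
  rewrite ltnNge qb /=.
  have yF : nth 0 (flatten B) (q - size b) \in flatten B.
    by apply: mem_nth; rewrite -(ltn_add2l (size b)) subnKC.
  rewrite inE notlast //= => /hall; by rewrite xl.
have qb : size b <= q by lia.
rewrite ltnNge pb ltnNge qb /=.
have xF : nth 0 (flatten B) (p - size b) \in flatten B.
    by apply: mem_nth; rewrite -(ltn_add2l (size b)) subnKC //; apply: ltn_trans qs.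
have yF : nth 0 (flatten B) (q - size b) \in flatten B.
    by apply: mem_nth; rewrite -(ltn_add2l (size b)) subnKC.
rewrite !inE !notlast //=; apply: IH => //; [apply: ltn_sub2r => //; exact: leq_ltn_trans pb pq | by rewrite -(ltn_add2l (size b)) subnKC].
Qed.


Lemma lsucc1 a b : lsucc [:: a] [:: b] = (a == b.+1).
Proof. by rewrite /lsucc /lmin /lmax /= !big_cons !big_nil minnn maxn0. Qed.

Lemma conv1 a : conv [:: a].
Proof. move=> x y z; rewrite !inE => /eqP -> /eqP -> h1 h2; apply/eqP; lia. Qed.

Lemma init_inv B n r : is_assemblee n r B ->
  Inv (XA B) (map (fun x => [:: x]) (aword_init B)).
Proof.
case=> _ aB hperm hs.
have uA : uniq (aword B) by rewrite /aword (perm_uniq hperm) iota_uniq.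
set g := fun x => if x \in block_ends B then lL else if is_increase B x then lH else l0.
have gL z : g z = lL -> z \in block_ends B by rewrite /g; case: ifP => // _; case: ifP.
have g0 z : g z = l0 -> is_increase B z = false by rewrite /g; case: ifP => // _; case: ifP.
have gH z : g z = lH -> is_increase B z by rewrite /g; case: ifP => // _; case: ifP.
have sI : size (aword_init B) = (size (aword B)).-1 by rewrite /aword_init size_takel // leq_pred.
have nI k : k < size (aword_init B) -> nth 0 (aword_init B) k = nth 0 (aword B) k.
  by move=> hk; rewrite /aword_init nth_take // -sI.
have labk k : nth [::] (map (fun x => [:: x]) (aword_init B)) k =
    if k < size (aword_init B) then [:: nth 0 (aword B) k] else [::].
  case: ltnP => h; first by rewrite (nth_map 0) // nI.
  by rewrite nth_default // size_map.
have wk k : k < size (aword_init B) -> nth l0 (XA B) k = g (nth 0 (aword B) k).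
  by move=> hk; rewrite /XA (nth_map 0) // nI.
split.
  by move=> k; rewrite labk; case: ifP => _; [apply: conv1 | apply: conv_nil].
move=> p q pq; rewrite /ent !labk.
case: (ltnP q (size (aword_init B))) => hq; last exact: P2_nil_r.
have hp : p < size (aword_init B) by apply: ltn_trans hq.
rewrite hp !wk //.
have pA : p < size (aword B) by move: hp; rewrite sI; lia.
have qA : q < size (aword B) by move: hq; rewrite sI; lia.
have ip : index (nth 0 (aword B) p) (aword B) = p by apply: index_uniq.
have iq : index (nth 0 (aword B) q) (aword B) = q by apply: index_uniq.
have xy : nth 0 (aword B) p != nth 0 (aword B) q.
  by apply/negP; rewrite nth_uniq // => /eqP e; lia.
split => /=.
- move=> z; rewrite !inE => /eqP -> /eqP e; by rewrite e eqxx in xy.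
- move=> /gL hx /gL hy a b; rewrite !inE => /eqP -> /eqP ->.
  by apply: be_order.
- rewrite lsucc1 => /eqP e /g0; rewrite /is_increase -e mem_nth //= ip iq pq; by case.
- rewrite lsucc1 => /eqP e /gH; rewrite /is_increase -e ip iq => /andP [_]; lia.
Qed.

Unset Implicit Arguments. Set Strict Implicit.

Theorem lemma3p5 (n r : nat) (B : seq (seq nat)) (fs : seq nat) :
  r <= n ->
  is_assemblee n.+1 r.+1 B ->
  tiling_of (XA B) fs ->
  forall p q : nat, p < n -> q < n ->
  lsucc (nth [::] (fe_final B fs) q) (nth [::] (fe_final B fs) p) ->
  let W := nw_word (XA B) in
  [/\ (nth l0 W p = l0 -> nth l0 W q = l0 -> q < p),
      (nth l0 W p = lH -> nth l0 W q = lH -> p < q) &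
      (nth l0 W p = lL -> nth l0 W q = lL -> q < p)].
Proof.
move=> _ hA ht p q _ _ hs W.
have [_ hP] : Inv W (fe_final B fs) := run_inv (init_inv hA) ht.
have hpq : p != q.
  apply/eqP => e; subst q; move/lsuccP: hs => [lt [x [y [xl yl _]]]].
  by have := lt _ _ xl xl; rewrite ltnn.
split.
- move=> Wp Wq; case: ltngtP => // pq; last by rewrite pq eqxx in hpq.
  by have [_ _ h _] := hP _ _ pq; case: (h hs).
- move=> Wp Wq; case: ltngtP => // pq; last by rewrite pq eqxx in hpq.
  by have [_ _ _ h] := hP _ _ pq; case: (h hs).
- move=> Wp Wq; case: ltngtP => // pq; last by rewrite pq eqxx in hpq.
  have [_ h _ _] := hP _ _ pq; have := h Wp Wq.
  move/lsuccP: hs => [lt [x [y [xl yl _]]]] lt'.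
  by have := lt _ _ xl yl; have := lt' _ _ yl xl; lia.
Qed.
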